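(* Fix $\alpha\in\mathbb{R}$ and suppose $Q_\alpha$ satisfies assumption (H). Fix $N\ge1$, $n\ge1$, $1\le m\le n$, $x\in\mathsf{X}$ and $\delta\in(0,1)$. Run the particle system with $Q=Q_\alpha$ (and arbitrary initial $\mu$) up to time $2n$ and, conditionally on $\mathcal{F}_{2n}$, let $(\check X_p;p=0,\dots,m)$ be a non-homogeneous Markov chain with $\check X_0=x$ and $\check X_p\sim P^N_{(n+p,2n)}(\check X_{p-1},\cdot)$ for $p\ge1$. Writing $\check{\mathbb{E}}_N$ for expectation under the joint law of the particle system and $(\check X_p)$, \[ \check{\mathbb{E}}_N\left[\mathbb{I}\Big[\sum_{p=1}^mU(\check X_p)>m\delta\Big]\prod_{p=0}^{m-1}\frac{\lambda^N_{n+p}}{G_\alpha(\check X_p)}\cdot\frac{h^N_{n,2n}(\check X_0)}{h^N_{n+m,2n}(\check X_m)}\right]=\pi_m(\delta), \] where $\pi_m(\delta):=\mathbb{P}_x\left(\sum_{p=1}^mU(X_p)>m\delta\right)$ for a Markov chain $(X_p)$ with transition kernel $M$ started at $X_0=x$.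
   Context: Setting: $(\mathsf{X},\mathcal{B})$ is a measurable space with countably generated $\sigma$-algebra; $\mathcal{P}$ the probability measures. For a measure $\mu$, kernel $K$, function $\varphi$: $\mu(\varphi)=\int\varphi\,d\mu$, $K(\varphi)(x)=\int K(x,dy)\varphi(y)$, $\mu K(\cdot)=\int\mu(dx)K(x,\cdot)$; $1$ the constant function one. $M$ is a Markov kernel, $U:\mathsf{X}\to[-1,1]$ measurable, $G_\alpha(x):=e^{\alpha U(x)}$ and $Q_\alpha(x,dy):=G_\alpha(x)M(x,dy)$. Assumption (H) for a kernel $Q$: there is a probability measure $\nu$ such that for all $x$, $Q(x,\cdot)$ is equivalent to $\nu$ with density $q(x,x')$ satisfying $\epsilon^-\le q\le\epsilon^+$ for constants $0<\epsilon^-,\epsilon^+<\infty$. With $Q=Q_\alpha$ and $G=G_\alpha$: for $\eta\in\mathcal{P}$, $\Phi(\eta):=\eta Q/\eta Q(1)$. Particle system: fix $N\ge1$, $\mu\in\mathcal{P}$; $\zeta_0^1,\dots,\zeta_0^N$ i.i.d. $\mu$; for $k\ge1$, conditionally on the past, the $\zeta_k^i$ are i.i.d. with law $\Phi(\eta^N_{k-1})$, where $\eta_k^N:=\frac1N\sum_{i=1}^N\delta_{\zeta_k^i}$; $\mathcal{F}_k:=\sigma(\zeta_0,\dots,\zeta_k)$. Define $\lambda_k^N:=\eta_k^N(G)$, $Q_k^N(x,dx'):=\frac{dQ(x,\cdot)}{d\Phi(\eta_{k-1}^N)}(x')\,\eta_k^N(dx')$ for $k\ge1$, $Q^N_{k,k}:=Id$,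 $Q^N_{p,k}:=Q^N_{p+1}\cdots Q^N_k$ for $p<k$, $h^N_{k,k}:=1$, $h_{p,k}^N(x):=\frac{Q^N_{p,k}(1)(x)}{\eta^N_pQ^N_{p,k}(1)}$ for $0\le p<k$, and for $1\le p\le k$ the random Markov kernel $P^N_{(p,k)}(x,dx'):=\frac{Q^N_p(x,dx')h^N_{p,k}(x')}{\lambda^N_{p-1}h^N_{p-1,k}(x)}$. *)

(* Defs.v *)
From HB Require Import structures.
From mathcomp Require Import all_boot all_order all_algebra.
From mathcomp Require Import all_classical all_reals all_analysis.
Set Implicit Arguments. Unset Strict Implicit. Unset Printing Implicit Defensive.
Import Order.TTheory GRing.Theory Num.Theory.
Local Open Scope classical_set_scope.
Local Open Scope ring_scope.

Definition countably_generated d (X : measurableType d) : Prop :=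
  exists A : nat -> set X, forall B : set X, measurable B <-> <<s range A >> B.

Definition Galpha (R : realType) (T : Type) (alpha : R) (U : T -> R) (x : T) : R :=
  expR (alpha * U x).

Definition upd (T : Type) (f : nat -> T) (s : nat) (v : T) : nat -> T :=
  fun u => if u == s then v else f u.

Definition ncons (T : Type) (z : T) (s : nat -> T) : nat -> T :=
  fun i => if i is i'.+1 then s i' else z.

Section Particles.
Context {d : measure_display} {X : measurableType d} {R : realType}.
Local Open Scope ereal_scope.

(* \int mu(dz_0) \int mu(dz_1) ... \int mu(dz_{k-1}) f(z) :
   integral of f w.r.t. the k-fold product mu^{\otimes k} (iterated, Tonelli) *)
Fixpoint iter_int (mu : {measure set X -> \bar R}) (k : nat)
    (f : (nat -> X) -> \bar R) : \bar R :=
  match k with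
  | 0%N => f (fun _ => point)
  | k'.+1 => \int[mu]_z iter_int mu k' (fun s => f (ncons z s))
  end.

Local Close Scope ereal_scope.

Definition emp (N : nat) (z : nat -> X) (f : X -> R) : R :=
  (\sum_(i < N) f (z i)) / N%:R.

Lemma Phi_weight_ge0 (N : nat) (alpha : R) (U : X -> R) (z : nat -> X) (i : nat) :
  0 <= Galpha alpha U (z i) / \sum_(j < N) Galpha alpha U (z j).
Proof.
by apply: divr_ge0; [exact: expR_ge0 | apply: sumr_ge0 => j _; exact: expR_ge0].
Qed.

(* Phi(eta^N) for the empirical measure eta^N of z, with Q = Q_alpha:
   Phi(eta)(A) = eta Q(A) / eta Q(1) = sum_i G(z_i) M(z_i, A) / sum_j G(z_j) *)
Definition Phi (N : nat) (alpha : R) (U : X -> R) (M : R.-pker X ~> X)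
    (z : nat -> X) : {measure set X -> \bar R} :=
  msum (fun i => mscale (NngNum (Phi_weight_ge0 N alpha U z i)) (M (z i))) N.

(* Expectation of f(zeta_0, ..., zeta_T) for the particle system:
   zeta_0^i iid mu, zeta_k^i iid Phi(eta_{k-1}^N) given the past.
   A history is zeta : nat -> nat -> X, zeta k i = zeta_k^i. *)
Fixpoint evol (N : nat) (alpha : R) (U : X -> R) (M : R.-pker X ~> X)
    (j t : nat) (zeta : nat -> nat -> X) (f : (nat -> nat -> X) -> \bar R)
    : \bar R :=
  match j with
  | 0%N => f zeta
  | j'.+1 => iter_int (Phi N alpha U M (zeta t)) N
               (fun z => evol N alpha U M j' t.+1 (upd zeta t.+1 z) f)
  end.

Definition ps_expect (N : nat) (alpha : R) (U : X -> R) (M : R.-pker X ~> X)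
    (mu : probability X R) (T : nat) (f : (nat -> nat -> X) -> \bar R) : \bar R :=
  iter_int mu N (fun z => evol N alpha U M T 0 (fun _ => z) f).

Section Quantities.
Variables (N : nat) (alpha : R) (U : X -> R) (q : X -> X -> R)
          (zeta : nat -> nat -> X).

Let G := Galpha alpha U.

Definition lam (k : nat) : R := emp N (zeta k) G.

(* version of dQ(x,.)/dPhi(eta_{k-1}^N) (y) = q(x,y) eta Q(1) / eta(q(.,y)),
   with eta = eta_{k-1}^N (so eta Q(1) = lambda_{k-1}^N since M is Markov) *)
Definition rn (k : nat) (x y : X) : R :=
  q x y * lam k.-1 / emp N (zeta k.-1) (fun z => q z y).

Definition Qk (k : nat) (g : X -> R) (x : X) : R :=
  \sum_(i < N) (rn k x (zeta k i) / N%:R) * g (zeta k i).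

(* QQr j p = Q^N_{p, p+j}(1) *)
Fixpoint QQr (j p : nat) : X -> R :=
  match j with
  | 0%N => fun _ => 1
  | j'.+1 => Qk p.+1 (QQr j' p.+1)
  end.

Definition QQ1 (p k : nat) : X -> R := QQr (k - p) p.

Definition hh (p k : nat) (x : X) : R :=
  if p == k then 1 else QQ1 p k x / emp N (zeta p) (QQ1 p k).

(* density of the random Markov kernel P^N_{(p,k)}(x, .) with respect to
   the counting of the atoms zeta_p^i:
   P^N_{(p,k)}(x,dx') = Q_p^N(x,dx') h_{p,k}(x') / (lambda_{p-1} h_{p-1,k}(x)) *)
Definition Pw (p k : nat) (x y : X) : R :=
  (rn p x y / N%:R) * hh p k y / (lam p.-1 * hh p.-1 k x).

(* integral of f(Xc_0, ..., Xc_m) w.r.t. the law of the non-homogeneous chain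
   Xc_{s+1} ~ P^N_{(t0+s+1, k)}(Xc_s, .), steps s, s+1, ..., s+j-1.
   Since P^N_{(p,k)}(x,.) = sum_i Pw p k x (zeta_p^i) delta_{zeta_p^i},
   the integral is a finite sum. *)
Fixpoint chain_int (t0 k : nat) (j s : nat) (path : nat -> X)
    (f : (nat -> X) -> R) : R :=
  match j with
  | 0%N => f path
  | j'.+1 => \sum_(i < N)
       Pw (t0 + s.+1) k (path s) (zeta (t0 + s.+1) i) *
       chain_int t0 k j' s.+1 (upd path s.+1 (zeta (t0 + s.+1) i)) f
  end.

End Quantities.

Local Open Scope ereal_scope.

Fixpoint mc_int (M : R.-pker X ~> X) (j s : nat) (path : nat -> X)
    (f : (nat -> X) -> \bar R) : \bar R :=
  match j with
  | 0%N => f path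
  | j'.+1 => \int[M (path s)]_y mc_int M j' s.+1 (upd path s.+1 y) f
  end.

Local Close Scope ereal_scope.

Definition pi_m (M : R.-pker X ~> X) (U : X -> R) (x : X) (m : nat) (delta : R)
    : \bar R :=
  mc_int M m 0 (fun _ => x)
    (fun path => (if m%:R * delta < \sum_(1 <= p < m.+1) U (path p)
                  then 1 else 0)%:E).

End Particles.

(* Main.v *)
Require Import Defs.
From HB Require Import structures.
From mathcomp Require Import all_boot all_order all_algebra.
From mathcomp Require Import all_classical all_reals all_analysis.
From mathcomp Require Import measurable_realfun.
From mathcomp Require Import ring lra zify.
Import Order.TTheory GRing.Theory Num.Theory.
Local Open Scope classical_set_scope.
Local Open Scope ring_scope.


Section kc.
Context {d d' : measure_display} {X : measurableType d} {T : measurableType d'}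
  {R : realType} (M : R.-pker X ~> X) (g : T -> X).
Definition kc (mg : measurable_fun setT g) : T -> {measure set X -> \bar R} :=
  fun t => M (g t).
Variable mg : measurable_fun setT g.
Let kc_meas U : measurable U -> measurable_fun [set: T] (kc mg ^~ U : T -> \bar R).
Proof. move=> mU; exact: measurableT_comp (measurable_kernel M U mU) mg. Qed.
HB.instance Definition _ := isKernel.Build _ _ T X R (kc mg) kc_meas.
Let kc_prob t : kc mg t setT = 1%E.
Proof. exact: prob_kernel. Qed.
HB.instance Definition _ := Kernel_isProbability.Build _ _ T X R (kc mg) kc_prob.
End kc.

Lemma int_comp_meas {d d' : measure_display} {X : measurableType d} {T : measurableType d'}
  {R : realType} (M : R.-pker X ~> X) (g : T -> X) (mg : measurable_fun setT g)
  (F : T * X -> \bar R) (F0 : forall z, (0 <= F z)%E) (mF : measurable_fun setT F) :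
  measurable_fun setT (fun t => \int[M (g t)]_y F (t, y))%E.
Proof.
have := (measurable_fun_integral_sfinite_kernel F (@kc _ _ _ _ _ M g mg) F0 mF).
rewrite /kc /=.
exact.
Qed.

Lemma measurable_inv_pos {d : measure_display} {T : measurableType d} {R : realType}
  (f : T -> R) : measurable_fun setT f -> (forall x, 0 < f x) ->
  measurable_fun setT (fun x => (f x)^-1).
Proof.
move=> mf fp.
have -> : (fun x => (f x)^-1) = expR \o (fun x => - ln (f x)).
  by apply/funext => x /=; rewrite expRN lnK // posrE.
apply: measurableT_comp; first exact: measurable_realfun.measurable_expR.
apply: measurable_funN.
apply: (@measurableT_comp _ _ _ _ _ _ (@ln R)) => //; exact: measurable_ln.
Qed.


Section dens.
Context d (T : measurableType d) (R : realType).
Variables (mu nu : {measure set T -> \bar R}) (g' : T -> R).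
Hypothesis g0 : forall x, 0 <= g' x.
Hypothesis mg' : measurable_fun setT g'.
Hypothesis Hd : forall A, measurable A -> nu A = (\int[mu]_(x in A) (g' x)%:E)%E.
Local Open Scope ereal_scope.
Import HBNNSimple.

Lemma density_integral (f : T -> \bar R) E : (forall x, 0 <= f x) ->
    measurable E -> measurable_fun E f ->
  \int[mu]_(x in E) (f x * (g' x)%:E) = \int[nu]_(x in E) f x.
Proof.
move=> f0 mE mf; set g := fun x => (g' x)%:E.
have mg : measurable_fun E g by apply/measurable_EFinP; exact: measurable_funTS.
pose h := nnsfun_approx mE mf.
have -> : \int[nu]_(x in E) f x =
    lim (\int[nu]_(x in E) (EFin \o h n) x @[n --> \oo]).
  have fE x : E x -> f x = lim ((EFin \o h n) x @[n --> \oo]).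
    by move=> Ex; apply/esym/cvg_lim => //; exact: cvg_nnsfun_approx.
  under eq_integral => x /[!inE] /fE -> //.
  apply: monotone_convergence => //.
  - move=> n; apply/measurable_EFinP.
    by apply: (measurable_funS measurableT) => //; exact/measurable_funP.
  - by move=> n x Ex //=; rewrite lee_fin.
  - by move=> x Ex a b ab; rewrite lee_fin; exact/lefP/nd_nnsfun_approx.
have -> : \int[mu]_(x in E) (f \* g) x =
    lim (\int[mu]_(x in E) ((EFin \o h n) \* g) x @[n --> \oo]).
  have fg x : E x -> f x * g x = lim (((EFin \o h n) \* g) x @[n --> \oo]).
    by move=> Ex; apply/esym/cvg_lim => //; apply: cvgeZr;
      [by []|exact: cvg_nnsfun_approx].
  under eq_integral => x /[!inE] /fg -> //.
  apply: monotone_convergence => [//| | |].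
  - move=> n; apply/emeasurable_funM => //; apply/measurable_funTS.
      exact/measurable_EFinP.
  - by move=> n x Ex /=; rewrite mule_ge0 ?lee_fin.
  - by move=> x Ex a b ab/=; rewrite lee_wpmul2r ?lee_fin//; exact/lefP/nd_nnsfun_approx.
suff suf n : \int[mu]_(x in E) ((EFin \o h n) x * g x) =
    \int[nu]_(x in E) (EFin \o h n) x.
  by under eq_fun do rewrite suf.
transitivity (\int[nu]_(x in E)
   (\sum_(y \in range (h n)) (y * \1_(h n @^-1` [set y]) x)%:E)); last first.
  by apply: eq_integral => t tE; rewrite /= fimfunE -fsumEFin.
have indich m r : measurable_fun E (fun x => (r * \1_(h m @^-1` [set r]) x)%:E).
  by apply: (measurable_comp measurableT) => //; exact: measurable_funM.
rewrite ge0_integral_fsum//; last by move=> m y Ey; exact: nnfun_muleindic_ge0.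
transitivity (\int[mu]_(x in E) (\sum_(y \in range (h n))
    (y * \1_(h n @^-1` [set y]) x)%:E * g x)).
  under [RHS]eq_integral => x xE.
    rewrite -ge0_mule_fsuml => [|y]; last exact: nnfun_muleindic_ge0.
    rewrite fsumEFin // -(fimfunE _ x); over.
  by [].
rewrite ge0_integral_fsum//; last 2 first.
  - by move=> y; apply: emeasurable_funM => //.
  - by move=> m y Ey; rewrite mule_ge0 ?lee_fin//; exact: nnfun_muleindic_ge0.
apply: eq_fsbigr => r rhn.
under [RHS]eq_integral do rewrite EFinM.
rewrite integralZl_indic_nnsfun => //.
under eq_integral do rewrite EFinM -muleA.
rewrite ge0_integralZl//.
- under eq_integral do rewrite muleC.
  rewrite (eq_integral (g \_ (h n @^-1` [set r]))); last first.
    by move=> x xE; rewrite epatch_indic.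
  rewrite -integral_mkcondr -Hd//; last first.
    have mA : measurable (h n @^-1` [set r]) by exact: measurable_sfunP.
    by rewrite (integral_indic _ mE mA) setIC.
- apply/emeasurable_funM => //; apply/measurable_EFinP.
  by apply: measurable_funTS; apply: measurable_indic; exact: measurable_sfunP.
- by move=> t Et; rewrite mule_ge0 ?lee_fin.
- by move: rhn; rewrite inE => -[t _ <-]; rewrite lee_fin.
Qed.
End dens.


Lemma upd_eq (T : Type) (f : nat -> T) s v : upd f s v s = v.
Proof. by rewrite /upd eqxx. Qed.
Lemma upd_neq (T : Type) (f : nat -> T) s v u : u != s -> upd f s v u = f u.
Proof. by rewrite /upd => /negbTE ->. Qed.

Section Alg.
Context {d : measure_display} {X : measurableType d} {R : realType}.
Variables (U : X -> R) (alpha : R) (q : X -> X -> R) (eps_m : R)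
  (N n m : nat) (delta : R).
Hypothesis Heps_m : 0 < eps_m.
Hypothesis Hq_pos : forall x y, eps_m <= q x y.
Hypothesis HN : (1 <= N)%N.

Definition Ind (path : nat -> X) : R :=
  if m%:R * delta < \sum_(1 <= p < m.+1) U (path p) then 1 else 0.

Definition ww (zeta : nat -> nat -> X) t (a y : X) : R :=
  rn N alpha U q zeta t a y / (N%:R * Galpha alpha U a).

Fixpoint Dj (zeta : nat -> nat -> X) (j s : nat) (path : nat -> X) : R :=
  match j with
  | 0%N => Ind path
  | j'.+1 => \sum_(i < N) ww zeta (n + s.+1) (path s) (zeta (n + s.+1) i) *
       Dj zeta j' s.+1 (upd path s.+1 (zeta (n + s.+1) i))
  end.

Lemma G_gt0 a : 0 < Galpha alpha U a.
Proof. exact: expR_gt0. Qed.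

Lemma N_gt0 : 0 < N%:R :> R.
Proof. by rewrite ltr0n. Qed.

Lemma sum_gt0 (f : 'I_N -> R) : (forall i, 0 < f i) -> 0 < \sum_(i < N) f i.
Proof.
move=> fp; rewrite (bigD1 (Ordinal HN)) //=.
have h1 := fp (Ordinal HN).
have h2 : 0 <= \sum_(i < N | i != Ordinal HN) f i.
  by apply: sumr_ge0 => i _; exact: ltW.
lra.
Qed.

Lemma emp_gt0 (z : nat -> X) (f : X -> R) : (forall y, 0 < f y) -> 0 < emp N z f.
Proof. by move=> fp; rewrite /emp divr_gt0 ?N_gt0 //; apply: sum_gt0. Qed.

Lemma q_gt0 a y : 0 < q a y.
Proof. exact: lt_le_trans Heps_m (Hq_pos a y). Qed.

Lemma lam_gt0 zeta k : 0 < lam N alpha U zeta k.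
Proof. by apply: emp_gt0 => y; exact: G_gt0. Qed.

Lemma rn_gt0 zeta k a y : 0 < rn N alpha U q zeta k a y.
Proof.
rewrite /rn; apply: divr_gt0; first by apply: mulr_gt0; [exact: q_gt0|exact: lam_gt0].
by apply: emp_gt0 => z; exact: q_gt0.
Qed.

Lemma QQr_gt0 zeta j : forall p a, 0 < QQr N alpha U q zeta j p a.
Proof.
elim: j => [//|j IH] p a /=; rewrite /Qk; apply: sum_gt0 => i.
apply: mulr_gt0 => //; apply: divr_gt0; [exact: rn_gt0|exact: N_gt0].
Qed.

Lemma hh_gt0 zeta p k a : 0 < hh N alpha U q zeta p k a.
Proof.
rewrite /hh; case: eqP => // _; apply: divr_gt0; first exact: QQr_gt0.
by apply: emp_gt0 => y; exact: QQr_gt0.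
Qed.

Definition Fm zeta (path : nat -> X) : R :=
  (if m%:R * delta < \sum_(1 <= p < m.+1) U (path p) then 1 else 0)
             * (\prod_(0 <= p < m)
                  (lam N alpha U zeta (n + p) / Galpha alpha U (path p)))
             * (hh N alpha U q zeta n (2 * n) (path 0%N)
                / hh N alpha U q zeta (n + m) (2 * n) (path m)).

Lemma chain_cancel zeta : forall j s path, (s + j = m)%N ->
  chain_int N alpha U q zeta n (2 * n) j s path (Fm zeta) =
  (\prod_(0 <= p < s) (lam N alpha U zeta (n + p) / Galpha alpha U (path p))) *
  (hh N alpha U q zeta n (2 * n) (path 0%N) /
   hh N alpha U q zeta (n + s) (2 * n) (path s)) * Dj zeta j s path.
Proof.
elim=> [|j IH] s path.
  rewrite addn0 => -> /=; rewrite /Fm /Ind.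
  by rewrite [RHS]mulrC !mulrA.
move=> Hs /=; rewrite mulr_sumr; apply: eq_bigr => i _.
rewrite IH; last by rewrite addSnnS.
set y := zeta (n + s.+1)%N i.
rewrite big_nat_recr //= upd_eq [upd path s.+1 y s]upd_neq ?neq_ltn ?ltnSn ?orbT //.
rewrite [upd path s.+1 y 0%N]upd_neq //.
rewrite (@eq_big_nat _ _ _ 0 s _ (fun p => lam N alpha U zeta (n + p) / Galpha alpha U (path p))); last first.
  by move=> p /andP [_ ps]; rewrite upd_neq // neq_ltn ltnS ltnW.
rewrite /Pw /ww addnS /=.
set P := \prod_(0 <= p < s) _.
have h1 := hh_gt0 zeta (n + s) (2 * n) (path s).
have h2 := hh_gt0 zeta (n + s).+1 (2 * n) y.
have h3 := lam_gt0 zeta (n + s).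
have h4 := G_gt0 (path s).
have h5 := N_gt0.
field.
by rewrite !gt_eqF.
Qed.

Lemma chain_cancel0 zeta x :
  chain_int N alpha U q zeta n (2 * n) m 0 (fun _ => x) (Fm zeta) =
  Dj zeta m 0 (fun _ => x).
Proof.
rewrite chain_cancel // big_nat addn0 big_geq // mul1r divff ?mul1r //.
by rewrite gt_eqF // hh_gt0.
Qed.
End Alg.


Section Iter.
Context {d : measure_display} {X : measurableType d} {R : realType}.
Variable mu : {measure set X -> \bar R}.
Hypothesis mu1 : mu setT = 1%E.
Local Open Scope ereal_scope.

Lemma int_cst1 (c : \bar R) : \int[mu]_(z in setT) c = c.
Proof.
have := integral_cst mu (@measurableT _ X) c.
by rewrite mu1 mule1.
Qed.

Lemma iter_cst k (c : \bar R) : iter_int mu k (fun _ => c) = c.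
Proof.
elim: k => [//|k IH] /=.
by rewrite IH int_cst1.
Qed.

Lemma iter_sum (a : X -> \bar R) (a0 : forall y, 0 <= a y)
  (ma : measurable_fun setT a) : forall K c, 0 <= c ->
  iter_int mu K (fun z => c + \sum_(i < K) a (z i)) =
  c + \sum_(i < K) \int[mu]_y a y.
Proof.
elim=> [|K IH] c c0 /=.
  by rewrite !big_ord0.
have E1 z : iter_int mu K (fun s => c + \sum_(i < K.+1) a (Defs.ncons z s i)) =
    (c + a z) + \sum_(i < K) \int[mu]_y a y.
  rewrite -IH; last by rewrite adde_ge0.
  congr (iter_int _ _ _); apply/funext => s.
  by rewrite big_ord_recl /= addeA.
under eq_integral => z _ do rewrite E1.
have S0 : 0 <= \sum_(i < K) \int[mu]_y a y.
  by apply: sume_ge0 => i _; apply: integral_ge0 => y _.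
under eq_integral => z _ do rewrite (addeC c) -addeA addeC.
rewrite ge0_integralD //; last by move=> y _; rewrite adde_ge0.
rewrite int_cst1 big_ord_recl.
rewrite [X in _ = c + X]addeC [in RHS]addeA; reflexivity.
Qed.
End Iter.


Section Part.
Context {d : measure_display} {X : measurableType d} {R : realType}.
Variables (M : R.-pker X ~> X) (U : X -> R) (alpha : R) (nu : probability X R)
  (q : X -> X -> R) (eps_m : R) (N : nat).
Hypothesis mq : measurable_fun setT (fun xy : X * X => q xy.1 xy.2).
Hypothesis Heps_m : 0 < eps_m.
Hypothesis Hq_pos : forall x y, eps_m <= q x y.
Hypothesis Hq_dens : forall (x : X) (A : set X), measurable A ->
     ((Galpha alpha U x)%:E * M x A = \int[nu]_(y in A) (q x y)%:E)%E.
Hypothesis HN : (1 <= N)%N.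

Lemma Phi_setT (z : nat -> X) : Phi N alpha U M z setT = 1%E.
Proof.
transitivity (\sum_(i < N) ((Galpha alpha U (z i) /
   \sum_(j < N) Galpha alpha U (z j))%:E * M (z i) setT))%E; first by [].
under eq_bigr do rewrite prob_kernel mule1.
rewrite sumEFin -mulr_suml divff // gt_eqF //.
by apply: sum_gt0 => // i; exact: G_gt0.
Qed.

Lemma evol_ext j : forall t zeta (f g : (nat -> nat -> X) -> \bar R),
  (forall zeta', (forall u, (u <= t)%N -> zeta' u = zeta u) -> f zeta' = g zeta') ->
  evol N alpha U M j t zeta f = evol N alpha U M j t zeta g.
Proof.
elim: j => [|j IH] t zeta f g H /=; first exact: H.
congr (iter_int _ _ _); apply/funext => z; apply: IH => zeta' H'.
apply: H => u ut; rewrite H' ?(leqW ut) // upd_neq //.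
by rewrite neq_ltn ltnS ut.
Qed.

Lemma evol_cst j : forall t zeta (c : \bar R),
  evol N alpha U M j t zeta (fun _ => c) = c.
Proof.
elim: j => [//|j IH] t zeta c /=.
have -> : (fun z => evol N alpha U M j t.+1 (upd zeta t.+1 z) (fun _ => c)) =
   (fun _ => c) by apply/funext => z; exact: IH.
by rewrite iter_cst // Phi_setT.
Qed.

Lemma mq1 a : measurable_fun setT (q a).
Proof. exact: (measurable_fun_pair2 (f := fun xy : X * X => q xy.1 xy.2) a mq). Qed.

Lemma mq2 y : measurable_fun setT (fun a => q a y).
Proof. exact: (measurable_fun_pair1 (f := fun xy : X * X => q xy.1 xy.2) y mq). Qed.

Lemma memp_q (z : nat -> X) : measurable_fun setT (fun y => emp N z (fun w => q w y)).
Proof.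
rewrite /emp; apply: measurable_funM; last exact: measurable_cst.
by apply: measurable_sum => i; exact: mq1.
Qed.

Lemma mrn zeta t a : measurable_fun setT (fun y => rn N alpha U q zeta t a y).
Proof.
rewrite /rn; apply: measurable_funM.
  by apply: measurable_funM; [exact: mq1|exact: measurable_cst].
apply: measurable_inv_pos; first exact: memp_q.
by move=> y; apply: emp_gt0 => // w; exact: (@q_gt0 _ _ _ q eps_m Heps_m Hq_pos).
Qed.

Lemma Phi_rn zeta t a (g : X -> \bar R) : (forall y, 0 <= g y)%E ->
  measurable_fun setT g ->
  (\int[Phi N alpha U M (zeta t)]_y ((rn N alpha U q zeta t.+1 a y)%:E * g y) =
   (Galpha alpha U a)%:E * \int[M a]_y g y)%E.
Proof.
move=> g0 mg.
set z := zeta t.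
set S := \sum_(j < N) Galpha alpha U (z j).
have Spos : 0 < S by apply: sum_gt0 => // i; exact: G_gt0.
set h := fun y => ((rn N alpha U q zeta t.+1 a y)%:E * g y)%E.
have mh : measurable_fun setT h.
  by apply: emeasurable_funM => //; apply/measurable_EFinP; exact: mrn.
have h0 y : (0 <= h y)%E.
  by apply: mule_ge0 => //; rewrite lee_fin ltW // (@rn_gt0 _ _ _ U alpha q eps_m N).
have qpos := @q_gt0 _ _ _ q eps_m Heps_m Hq_pos.
have dens (b : X) (f : X -> \bar R) : (forall y, 0 <= f y)%E -> measurable_fun setT f ->
    ((Galpha alpha U b)%:E * \int[M b]_y f y = \int[nu]_y (f y * (q b y)%:E))%E.
  move=> f0 mf.
  rewrite -(@ge0_integral_mscale _ _ _ (M b) setT measurableT (NngNum (ltW (G_gt0 U alpha b))) f mf) //.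
  symmetry; apply: density_integral => //.
  - by move=> y; exact: ltW.
  - exact: mq1.
  - by move=> A mA /=; rewrite /mscale /= Hq_dens.
rewrite /Phi ge0_integral_measure_sum //; last by move=> y _; exact: h0.
transitivity (\sum_(i < N) ((S^-1)%:E * \int[nu]_y (h y * (q (z i) y)%:E)))%E.
  apply: eq_bigr => i _; rewrite ge0_integral_mscale //; last by move=> y _; exact: h0.
  rewrite -/h -(dens (z i) h) //= muleA -EFinM.
  by rewrite mulrC.
rewrite -ge0_sume_distrr; last first.
  by move=> i _; apply: integral_ge0 => y _; rewrite mule_ge0 // lee_fin ltW.
rewrite -ge0_integral_sum //; last 2 first.
  - by move=> i; apply: emeasurable_funM => //; apply/measurable_EFinP; exact: mq1.
  - by move=> i y _; rewrite mule_ge0 // lee_fin ltW.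
transitivity ((S^-1)%:E * \int[nu]_y (S%:E * (g y * (q a y)%:E)))%E.
  congr (_ * _)%E; apply: eq_integral => y _.
  rewrite -ge0_sume_distrr; last by move=> i _; rewrite lee_fin ltW.
  rewrite sumEFin /h muleAC -EFinM [RHS]muleCA -EFinM [RHS]muleC.
  congr (_ * _)%E; congr (_%:E).
  rewrite /rn /lam /emp /=.
  have Sq : 0 < \sum_(i < N) q (z i) y by apply: sum_gt0.
  have Np := @N_gt0 R N HN.
  rewrite -/z -/S.
  field; rewrite !gt_eqF //.
rewrite ge0_integralZl_EFin //; last 3 first.
- by move=> y _; rewrite mule_ge0 // lee_fin ltW.
- by apply: emeasurable_funM => //; apply/measurable_EFinP; exact: mq1.
- exact: ltW.
by rewrite muleA -EFinM mulVf ?gt_eqF // mul1e -dens.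
Qed.
End Part.


Section Good.
Context {d : measure_display} {X : measurableType d} {R : realType}.
Variables (M : R.-pker X ~> X) (U : X -> R) (m : nat) (delta : R).
Hypothesis mU : measurable_fun setT U.

Definition goodF (f : (nat -> X) -> \bar R) := forall (d' : measure_display)
  (T : measurableType d') (phi : T -> nat -> X),
  (forall i, measurable_fun setT (fun t => phi t i)) ->
  measurable_fun setT (fun t => f (phi t)).

Lemma Ind_good : goodF (fun path => (Ind U m delta path)%:E).
Proof.
move=> d' T phi Hphi; apply/measurable_EFinP; rewrite /Ind.
apply: measurable_fun_ifT; [|exact: measurable_cst|exact: measurable_cst].
apply: measurable_fun_ltr; first exact: measurable_cst.
by apply: measurable_sum => p; exact: measurableT_comp mU (Hphi p).
Qed.

Lemma mc_ge0 j : forall s path (f : (nat -> X) -> \bar R),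
  (forall p, 0 <= f p)%E -> (0 <= mc_int M j s path f)%E.
Proof.
elim: j => [|j IH] s path f f0 /=; first exact: f0.
by apply: integral_ge0 => y _; exact: IH.
Qed.

Lemma mc_good j : forall s (f : (nat -> X) -> \bar R), goodF f ->
  (forall p, 0 <= f p)%E -> goodF (fun path => mc_int M j s path f).
Proof.
elim: j => [//|j IH] s f Hf f0 d' T phi Hphi /=.
have := @int_comp_meas _ _ X T R M (fun t => phi t s) (Hphi s)
  (fun ty => mc_int M j s.+1 (upd (phi ty.1) s.+1 ty.2) f).
apply.
  by move=> z; exact: mc_ge0.
apply: (IH s.+1 f Hf f0 _ _ (fun ty => upd (phi ty.1) s.+1 ty.2)) => i.
rewrite /upd; case: (i == s.+1); first exact: measurable_snd.
exact: measurableT_comp (Hphi i) measurable_fst.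
Qed.

Lemma good_upd (f : (nat -> X) -> \bar R) path s :
  goodF f -> measurable_fun setT (fun y => f (upd path s y)).
Proof.
move=> Hf; apply: (Hf _ X (fun y => upd path s y)) => i.
rewrite /upd; case: (i == s); first exact: measurable_id.
exact: measurable_cst.
Qed.
End Good.


Section Main.
Context {d : measure_display} {X : measurableType d} {R : realType}.
Variables (M : R.-pker X ~> X) (U : X -> R) (alpha : R) (nu : probability X R)
  (q : X -> X -> R) (eps_m : R) (N n m : nat) (delta : R).
Hypothesis mU : measurable_fun setT U.
Hypothesis mq : measurable_fun setT (fun xy : X * X => q xy.1 xy.2).
Hypothesis Heps_m : 0 < eps_m.
Hypothesis Hq_pos : forall x y, eps_m <= q x y.
Hypothesis Hq_dens : forall (x : X) (A : set X), measurable A ->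
     ((Galpha alpha U x)%:E * M x A = \int[nu]_(y in A) (q x y)%:E)%E.
Hypothesis HN : (1 <= N)%N.
Hypothesis Hmn : (m <= n)%N.

Let IndE := fun path : nat -> X => (Ind U m delta path)%:E.

Lemma ww_ext (z1 z2 : nat -> nat -> X) t a y : z1 t.-1 = z2 t.-1 ->
  ww U alpha q N z1 t a y = ww U alpha q N z2 t a y.
Proof. by move=> E; rewrite /ww /rn /lam E. Qed.

Lemma mww zeta t a : measurable_fun setT (fun y => ww U alpha q N zeta t a y).
Proof.
rewrite /ww; apply: measurable_funM; last exact: measurable_cst.
exact: (@mrn _ _ _ U alpha q eps_m N mq Heps_m Hq_pos HN).
Qed.

Lemma ww_ge0 zeta t a y : 0 <= ww U alpha q N zeta t a y.
Proof.
apply: divr_ge0; first exact/ltW/(@rn_gt0 _ _ _ U alpha q eps_m N Heps_m Hq_pos HN).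
by apply/ltW/mulr_gt0; [exact: N_gt0|exact: G_gt0].
Qed.


Lemma main_ind r : forall p, (p + r = m)%N -> forall zeta (I : finType)
  (c : I -> R) (paths : I -> nat -> X), (forall k, 0 <= c k) ->
  evol N alpha U M (n - p) (n + p) zeta
    (fun zeta' => (\sum_(k : I) c k * Dj U alpha q N n m delta zeta' r p (paths k))%:E) =
  (\sum_(k : I) (c k)%:E * mc_int M r p (paths k) IndE)%E.
Proof.
elim: r => [|r IH] p Hp zeta I c paths c0.
  rewrite (@evol_ext _ _ _ M U alpha N _ _ _ _
     (fun _ => (\sum_(k : I) c k * Ind U m delta (paths k))%:E)); last by [].
  rewrite evol_cst // -sumEFin; apply: eq_bigr => k _.
  by rewrite EFinM.
have pn : (p < n)%N by lia.
rewrite -(subnSK pn) /=.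
set t := (n + p)%N.
set a := fun y => (\sum_(k : I) (c k * ww U alpha q N zeta t.+1 (paths k p) y)%:E *
   mc_int M r p.+1 (upd (paths k) p.+1 y) IndE)%E.
have tE : t.+1 = (n + p.+1)%N by rewrite addnS.
have E1 z : evol N alpha U M (n - p.+1) t.+1 (upd zeta t.+1 z)
   (fun zeta' => (\sum_(k : I) c k * Dj U alpha q N n m delta zeta' r.+1 p (paths k))%:E) =
   (0 + \sum_(i < N) a (z i))%E.
  rewrite add0e /a exchange_big pair_bigA /=.
  rewrite tE.
  rewrite (@evol_ext _ _ _ M U alpha N _ _ _ _
     (fun zeta' => (\sum_(u : I * 'I_N) (c u.1 * ww U alpha q N zeta (n + p.+1) (paths u.1 p) (z u.2)) *
        Dj U alpha q N n m delta zeta' r p.+1 (upd (paths u.1) p.+1 (z u.2)))%:E)).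
    rewrite IH //; first by lia.
    by move=> u; apply: mulr_ge0 => //; exact: ww_ge0.
  move=> zeta' H'; congr (_%:E).
  have z1 : zeta' (n + p.+1)%N = z by rewrite H' // upd_eq.
  have z2 : zeta' (n + p)%N = zeta (n + p)%N.
    rewrite H' ?upd_neq //; [by rewrite -tE neq_ltn ltnSn | by rewrite -tE].
  rewrite -(pair_bigA _ (fun (k : I) (i : 'I_N) => c k * ww U alpha q N zeta (n + p.+1) (paths k p) (z i) *
        Dj U alpha q N n m delta zeta' r p.+1 (upd (paths k) p.+1 (z i)))) /=.
  apply: eq_bigr => k _ /=.
  rewrite mulr_sumr; apply: eq_bigr => i _.
  rewrite z1 mulrA (@ww_ext zeta' zeta) //.
  by rewrite -tE /= z2.
have -> : (fun z => evol N alpha U M (n - p.+1) t.+1 (upd zeta t.+1 z)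
   (fun zeta' => (\sum_(k : I) c k * Dj U alpha q N n m delta zeta' r.+1 p (paths k))%:E)) =
   (fun z => 0 + \sum_(i < N) a (z i))%E by apply/funext => z; exact: E1.
have a0 y : (0 <= a y)%E.
  apply: sume_ge0 => k _; apply: mule_ge0.
    by rewrite lee_fin mulr_ge0 // ww_ge0.
  by apply: mc_ge0 => path; rewrite lee_fin /Ind; case: ifP.
have mg k : measurable_fun setT (fun y => mc_int M r p.+1 (upd (paths k) p.+1 y) IndE).
  apply: (@good_upd _ _ _ (fun path => mc_int M r p.+1 path IndE)).
  apply: (@mc_good _ _ _ M r p.+1 IndE (@Ind_good _ _ _ U m delta mU)).
  by move=> path; rewrite lee_fin /Ind; case: ifP.
have ma : measurable_fun setT a.
  apply: emeasurable_sum => k; apply: emeasurable_funM => //.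
  apply/measurable_EFinP; apply: measurable_funM; first exact: measurable_cst.
  exact: mww.
rewrite (@iter_sum _ _ _ _ (@Phi_setT _ _ _ M U alpha N HN (zeta t)) a a0 ma) // add0e.
have Ia : (\int[Phi N alpha U M (zeta t)]_y a y =
   \sum_(k : I) ((c k / N%:R)%:E *
     \int[M (paths k p)]_y mc_int M r p.+1 (upd (paths k) p.+1 y) IndE))%E.
  rewrite /a ge0_integral_sum //; last 2 first.
  - move=> k; apply: emeasurable_funM => //.
    apply/measurable_EFinP; apply: measurable_funM; first exact: measurable_cst.
    exact: mww.
  - move=> k y _; apply: mule_ge0; first by rewrite lee_fin mulr_ge0 // ww_ge0.
    by apply: mc_ge0 => path; rewrite lee_fin /Ind; case: ifP.
  apply: eq_bigr => k _.
  have G0 := G_gt0 U alpha (paths k p).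
  have Np := @N_gt0 R N HN.
  transitivity (\int[Phi N alpha U M (zeta t)]_y
     ((c k / (N%:R * Galpha alpha U (paths k p)))%:E *
      ((rn N alpha U q zeta t.+1 (paths k p) y)%:E *
        mc_int M r p.+1 (upd (paths k) p.+1 y) IndE)))%E.
    apply: eq_integral => y _; rewrite muleA -EFinM /ww /rn.
    congr (_ * _)%E; congr (_%:E).
    have E0 : 0 < emp N (zeta t) (q^~ y).
      by apply: emp_gt0 => // w; exact: (@q_gt0 _ _ _ q eps_m Heps_m Hq_pos).
    rewrite /=.
    by field; rewrite !gt_eqF // mulr_gt0.
  rewrite ge0_integralZl_EFin //; last 3 first.
  - move=> y _; apply: mule_ge0.
      by rewrite lee_fin ltW // (@rn_gt0 _ _ _ U alpha q eps_m N Heps_m Hq_pos HN).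
    by apply: mc_ge0 => path; rewrite lee_fin /Ind; case: ifP.
  - apply: emeasurable_funM => //; apply/measurable_EFinP.
    exact: (@mrn _ _ _ U alpha q eps_m N mq Heps_m Hq_pos HN).
  - by apply: divr_ge0 => //; apply/ltW/mulr_gt0.
  rewrite (@Phi_rn _ _ _ M U alpha nu q eps_m N mq Heps_m Hq_pos Hq_dens HN); last 2 first.
  - by move=> y; apply: mc_ge0 => path; rewrite lee_fin /Ind; case: ifP.
  - exact: mg.
  rewrite muleA -EFinM; congr (_ * _)%E; congr (_%:E).
  by field; rewrite !gt_eqF.
rewrite Ia exchange_big /=; apply: eq_bigr => k _.
rewrite -ge0_sume_distrl; last first.
  by move=> i _; rewrite lee_fin divr_ge0.
rewrite sumEFin sumr_const card_ord -(mulr_natr (c k / N%:R) N) divfK //.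
by rewrite gt_eqF // (@N_gt0 R N HN).
Qed.

Lemma top_evol x : forall k, (k <= n)%N -> forall zeta,
  evol N alpha U M (n + k) (n - k) zeta
    (fun zeta => (Dj U alpha q N n m delta zeta m 0 (fun _ => x))%:E) =
  pi_m M U x m delta.
Proof.
elim=> [|k IH] kn zeta.
  rewrite addn0 subn0.
  transitivity (mc_int M m 0 (fun _ => x) IndE); last by [].
  have := @main_ind m 0 (add0n m) zeta ('I_1) (fun _ => 1) (fun _ _ => x) (fun _ => ler01).
  rewrite subn0 addn0 big_ord1 mul1e => <-.
  by apply: evol_ext => zeta' _; rewrite big_ord1 mul1r.
have kn' : (k < n)%N by lia.
rewrite addnS /= (subnSK kn').
have -> : (fun z => evol N alpha U M (n + k) (n - k) (upd zeta (n - k) z)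
    (fun zeta => (Dj U alpha q N n m delta zeta m 0 (fun _ => x))%:E)) =
  (fun _ => pi_m M U x m delta).
  by apply/funext => z; apply: IH; exact: ltnW.
by rewrite iter_cst // Phi_setT.
Qed.
End Main.


Theorem proposition7
  (d : measure_display) (X : measurableType d) (R : realType)
  (HX : countably_generated X)
  (M : R.-pker X ~> X)
  (U : X -> R) (mU : measurable_fun setT U) (HU : forall x, -1 <= U x <= 1)
  (alpha : R)
  (* assumption (H) for Q_alpha(x,dy) = G_alpha(x) M(x,dy) *)
  (nu : probability X R) (q : X -> X -> R) (eps_m eps_p : R)
  (mq : measurable_fun setT (fun xy : X * X => q xy.1 xy.2))
  (Heps_m : 0 < eps_m) (Heps_p : 0 < eps_p)
  (Hq_bnd : forall x y, eps_m <= q x y <= eps_p)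
  (Hq_dens : forall (x : X) (A : set X), measurable A ->
     ((Galpha alpha U x)%:E * M x A = \int[nu]_(y in A) (q x y)%:E)%E)
  (N n m : nat) (HN : (1 <= N)%N) (Hn : (1 <= n)%N) (Hm1 : (1 <= m)%N)
  (Hmn : (m <= n)%N)
  (x : X) (delta : R) (Hdelta : 0 < delta < 1)
  (mu : probability X R) :
  ps_expect N alpha U M mu (2 * n)
    (fun zeta =>
       (chain_int N alpha U q zeta n (2 * n) m 0 (fun _ => x)
          (fun path =>
             (if m%:R * delta < \sum_(1 <= p < m.+1) U (path p) then 1 else 0)
             * (\prod_(0 <= p < m)
                  (lam N alpha U zeta (n + p) / Galpha alpha U (path p)))
             * (hh N alpha U q zeta n (2 * n) (path 0%N)
                / hh N alpha U q zeta (n + m) (2 * n) (path m))))%:E)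
  = pi_m M U x m delta.
Proof.
have Hq_pos : forall x y, eps_m <= q x y by move=> a b; case/andP: (Hq_bnd a b).
rewrite /ps_expect.
have -> : (fun zeta =>
       (chain_int N alpha U q zeta n (2 * n) m 0 (fun _ => x)
          (fun path =>
             (if m%:R * delta < \sum_(1 <= p < m.+1) U (path p) then 1 else 0)
             * (\prod_(0 <= p < m)
                  (lam N alpha U zeta (n + p) / Galpha alpha U (path p)))
             * (hh N alpha U q zeta n (2 * n) (path 0%N)
                / hh N alpha U q zeta (n + m) (2 * n) (path m))))%:E) =
   (fun zeta => (Dj U alpha q N n m delta zeta m 0 (fun _ => x))%:E).
  apply/funext => zeta; congr (_%:E).
  exact: (@chain_cancel0 _ _ _ U alpha q eps_m N n m delta Heps_m Hq_pos HN zeta x).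
have -> : (fun z => evol N alpha U M (2 * n) 0 (fun _ => z)
    (fun zeta => (Dj U alpha q N n m delta zeta m 0 (fun _ => x))%:E)) =
  (fun _ => pi_m M U x m delta).
  apply/funext => z.
  have := @top_evol _ _ _ M U alpha nu q eps_m N n m delta mU mq Heps_m Hq_pos
    Hq_dens HN Hmn x n (leqnn n) (fun _ => z).
  by rewrite addnn subnn -mul2n.
rewrite iter_cst //; exact: probability_setT.
Qed.
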